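(* For every integer $k \geq 2$ and every $0 < \gamma \leq 1/100$ there exists $n_0$ such that for every $n \geq n_0$ the following holds. Let $H$ be an $n$-vertex $k$-graph with $\delta_{k-1}(H) \geq n/3$, and let $G$ be the $\gamma$-diamond graph of $H$. Then $\delta(G) \geq n/10$.
   Context: $\delta_{k-1}(H)$ is the minimum over $(k-1)$-subsets $S \subseteq V(H)$ of the number of edges containing $S$. For $x, y \in V(H)$, an $(x,y)$-diamond is a pair of edges $e, f$ of $H$ with $|e \cap f| = k-1$, $x \in e\setminus f$, $y \in f \setminus e$. The $\gamma$-diamond graph of an $n$-vertex $k$-graph $H$ is the graph $G$ on $V(H)$ in which $xy \in E(G)$ if and only if $H$ contains at least $\gamma\binom{n}{k-1}$ distinct $(x,y)$-diamonds. $\delta(G)$ is the minimum degree of $G$. *)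

(* Defs.v *)
From mathcomp Require Import all_boot all_order all_algebra.
Set Implicit Arguments. Unset Strict Implicit. Unset Printing Implicit Defensive.
Import Order.TTheory GRing.Theory Num.Theory.
Local Open Scope ring_scope.

Definition kgraph (n k : nat) (H : {set {set 'I_n}}) : Prop :=
  forall e, e \in H -> #|e| = k.

Definition codeg (n : nat) (H : {set {set 'I_n}}) (S : {set 'I_n}) : nat :=
  #|[set e in H | S \subset e]|.

Definition min_codeg_ge (n k : nat) (H : {set {set 'I_n}}) (d : rat) : Prop :=
  forall S : {set 'I_n}, #|S| = k.-1 -> d <= (codeg H S)%:R.

Definition diamonds (n k : nat) (H : {set {set 'I_n}}) (x y : 'I_n)
  : {set {set 'I_n} * {set 'I_n}} :=
  [set p | [&& p.1 \in H, p.2 \in H, (#|p.1 :&: p.2| == k.-1)%N,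
              x \in p.1 :\: p.2 & y \in p.2 :\: p.1]].

Definition diamond_adj (n k : nat) (gamma : rat) (H : {set {set 'I_n}})
  (x y : 'I_n) : bool :=
  gamma * ('C(n, k.-1))%:R <= (#|diamonds k H x y|)%:R.

(* degree of x in the gamma-diamond graph (loops impossible: x ∈ e\f, x ∉ f\e) *)
Definition diamond_deg (n k : nat) (gamma : rat) (H : {set {set 'I_n}})
  (x : 'I_n) : nat :=
  #|[set y | (y != x) && diamond_adj k gamma H x y]|.

(* Main.v *)
Require Import Defs.
From mathcomp Require Import all_boot all_order all_algebra.
From mathcomp Require Import zify ring lra.
Import Order.TTheory GRing.Theory Num.Theory.
Local Open Scope ring_scope.

Lemma sum_ind_card (T : finType) (P : pred T) :
  (\sum_(i : T) (P i : nat) = #|[set i | P i]|)%N.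
Proof. by rewrite -sum1dep_card [RHS]big_mkcond. Qed.

Lemma card_pairs (A B : finType) (P : {set A * B}) :
  #|P| = (\sum_a \sum_b (((a,b) \in P) : nat))%N.
Proof.
rewrite pair_big /= -sum1_card big_mkcond /=; apply: eq_bigr => -[a b] _ //=.
Qed.

Lemma diam_xx n k (H : {set {set 'I_n}}) x : diamonds k H x x = set0.
Proof.
apply/setP => p; rewrite !inE.
by case: (x \in p.1); case: (x \in p.2); rewrite /= ?andbF.
Qed.

Lemma diam_shape n k (H : {set {set 'I_n}}) x y e f : kgraph k H ->
  (e,f) \in diamonds k H x y -> [/\ e \in H, x \in e & f = (e :\ x) :|: [set y]].
Proof.
move=> hk; rewrite inE /= => /and5P [He Hf Hc Hx Hy].
have ke := hk e He; have kf := hk f Hf.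
move: Hx Hy; rewrite !inE => /andP[xf xe] /andP[ye yf].
split => //.
have h1 : f :&: e = e :\ x.
  apply/eqP; rewrite eqEcard; apply/andP; split.
    apply/subsetP => z; rewrite !inE => /andP[zf ze]; rewrite ze andbT.
    by apply/eqP => zx; move: xf; rewrite -zx zf.
  rewrite (cardsD1 x e) xe add1n in ke; by rewrite setIC (eqP Hc) -ke.
have h2 : f :\: e = [set y].
  apply/eqP; rewrite eq_sym eqEcard cards1 sub1set !inE ye yf /=.
  rewrite cardsD setIC (eqP Hc) kf; lia.
by rewrite -h1 -h2 setID.
Qed.
Arguments diam_shape {n k H x y e f}.

Lemma diam_le n k (H : {set {set 'I_n}}) x y : kgraph k H ->
  (#|diamonds k H x y| <= #|[set e in H | x \in e]|)%N.
Proof.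
move=> hk; apply: leq_trans (leq_imset_card (fun e => (e, (e :\ x) :|: [set y])) [set e in H | x \in e]).
apply: subset_leq_card; apply/subsetP => -[e f] /(diam_shape hk) [He xe ->].
by apply/imsetP; exists e => //; rewrite inE He xe.
Qed.

Lemma claimA n k' (H : {set {set 'I_n}}) (x : 'I_n) : kgraph k'.+2 H ->
  min_codeg_ge k'.+2 H (n%:R/3) ->
  ('C(n, k'.+1)%:R / 3 <= #|[set e in H | x \in e]|%:R :> rat).
Proof.
move=> hk hcod.
set Ex := [set e in H | x \in e].
pose Tset := [set T : {set 'I_n} | T \subset [set~ x] & #|T| == k'].
pose gb T e := [&& T \in Tset, e \in Ex & T \subset e].
have h1 : (\sum_e \sum_T (gb T e : nat) = #|Ex| * k'.+1)%N.
  rewrite -sum1_card big_distrl /= [RHS]big_mkcond /=; apply: eq_bigr => e _.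
  case eE: (e \in Ex); last by apply: big1 => T _; rewrite /gb eE andbF.
  rewrite mul1n sum_ind_card.
  have ke : #|e :\ x| = k'.+1.
    move: eE; rewrite inE => /andP[He xe].
    have := hk e He; rewrite (cardsD1 x e) xe add1n => /eqP; rewrite eqSS => /eqP //.
  rewrite -(binSn k') -ke -cards_draws; apply: eq_card => T; rewrite /gb eE /= !inE.
  rewrite setDE subsetI.
  by case: (T \subset e); case: (T \subset [set~ x]); case: (#|T| == k').
have h2 : forall T, T \in Tset -> (n%:R/3 <= (\sum_e (gb T e : nat))%:R :> rat).
  move=> T hT; rewrite sum_ind_card.
  have -> : [set e | gb T e] = [set e in H | (x |: T) \subset e].
    apply/setP => e; rewrite /gb hT /= !inE subUset sub1set.
    by case: (e \in H); case: (x \in e).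
  apply: hcod; rewrite cardsU1.
  move: hT; rewrite inE => /andP[/subsetP hT /eqP ->].
  have -> : x \notin T by apply/negP => /hT; rewrite !inE eqxx.
  by [].
have h3 : (n%:R/3 * ('C(n.-1, k'))%:R <= (#|Ex| * k'.+1)%:R :> rat).
  rewrite -h1 exchange_big natr_sum /=.
  apply: le_trans (_ : \sum_(T in Tset) (n%:R/3) <= _).
    rewrite sumr_const.
    have -> : #|Tset| = 'C(n.-1, k').
      by rewrite cards_draws cardsC1 card_ord.
    by rewrite mulr_natr.
  rewrite [X in _ <= X](bigID (mem Tset)) /=.
  rewrite -[X in X <= _]addr0; apply: lerD.
    by apply: ler_sum => T hT; exact: h2.
  by apply: sumr_ge0 => T _; exact: ler0n.
have hb := mul_bin_diag n k'.
have hb' : (n%:R * ('C(n.-1, k'))%:R = (k'.+1)%:R * ('C(n, k'.+1))%:R :> rat).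
  by rewrite -!natrM hb.
have hk0 : (0 < (k'.+1)%:R :> rat) by rewrite ltr0n.
rewrite natrM in h3.
nra.
Qed.

Lemma claimB n k' (H : {set {set 'I_n}}) (x : 'I_n) : kgraph k'.+2 H ->
  min_codeg_ge k'.+2 H (n%:R/3) ->
  (#|[set e in H | x \in e]|%:R * (n%:R/3 - 1)
     <= (\sum_y #|diamonds k'.+2 H x y|)%:R :> rat).
Proof.
move=> hk hcod.
set Ex := [set e in H | x \in e].
have hS : (\sum_y #|diamonds k'.+2 H x y| =
   \sum_e \sum_f \sum_y ((e,f) \in diamonds k'.+2 H x y : nat))%N.
  under eq_bigr do rewrite card_pairs.
  rewrite exchange_big /=; apply: eq_bigr => e _.
  by rewrite exchange_big.
have hF : forall e, e \in Ex -> (n%:R/3 - 1 <=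
    (\sum_f \sum_y ((e,f) \in diamonds k'.+2 H x y : nat))%:R :> rat).
  move=> e; rewrite inE => /andP[He xe].
  have ke := hk e He.
  have kS : #|e :\ x| = k'.+1.
    by move: ke; rewrite (cardsD1 x e) xe add1n => /eqP; rewrite eqSS => /eqP.
  pose F := [set f in H | (e :\ x \subset f) && (f != e)].
  have c1 : (codeg H (e :\ x) <= #|F|.+1)%N.
    rewrite /codeg; apply: leq_trans (_ : #|e |: F| <= _)%N.
      apply: subset_leq_card; apply/subsetP => f; rewrite !inE => /andP[fH Sf].
      by rewrite fH Sf /= orbN.
    by rewrite cardsU1 -add1n leq_add2r leq_b1.
  have c2 : (#|F| <= \sum_f \sum_y ((e,f) \in diamonds k'.+2 H x y : nat))%N.
    rewrite -sum1_card [X in (X <= _)%N]big_mkcond /=; apply: leq_sum => f _.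
    case fF: (f \in F) => //.
    move: fF; rewrite !inE => /andP[fH /andP[Sf fe]].
    have kf := hk f fH.
    have xf : x \notin f.
      apply: contra fe => xf; rewrite eq_sym eqEcard ke kf leqnn andbT.
      apply/subsetP => z ze; case: (z =P x) => [->//|/eqP zx].
      by apply: (subsetP Sf); rewrite !inE zx ze.
    have : ~~ (f \subset e).
      by apply: contra fe => fe'; rewrite eqEcard fe' ke kf leqnn.
    case/subsetPn => y yf ye.
    have hef : e :&: f = e :\ x.
      apply/eqP; rewrite eqEsubset; apply/andP; split.
        apply/subsetP => z; rewrite !inE => /andP[ze zf]; rewrite ze andbT.
        by apply/eqP => zx; move: xf; rewrite -zx zf.
      by rewrite subsetI Sf andbT; apply/subsetP => z; rewrite !inE => /andP[_ ->].
    rewrite (bigD1 y) //= inE /= fH He !inE xe xf yf ye /= hef kS eqxx.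
    by [].
  have c3 : (codeg H (e :\ x) <= 
     (\sum_f \sum_y ((e,f) \in diamonds k'.+2 H x y : nat)).+1)%N.
    by apply: leq_trans c1 _; rewrite ltnS.
  have := hcod _ kS.
  move: c3; rewrite -(ler_nat rat) -addn1 natrD.
  lra.
rewrite hS natr_sum.
rewrite [X in _ <= X](bigID (mem Ex)) /=.
rewrite -[X in X <= _]addr0; apply: lerD; last first.
  by apply: sumr_ge0 => e _; exact: ler0n.
apply: le_trans (ler_sum _ hF).
by rewrite sumr_const mulr_natl.
Qed.

Theorem lemma7p1 (k : nat) (gamma : rat) :
  (2 <= k)%N -> 0 < gamma -> gamma <= 1 / 100 ->
  exists n0 : nat, forall (n : nat), (n0 <= n)%N ->
    forall H : {set {set 'I_n}},
      kgraph k H ->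
      min_codeg_ge k H (n%:R / 3) ->
      forall x : 'I_n, n%:R / 10 <= (diamond_deg k gamma H x)%:R :> rat.
Proof.
move=> k2 g0 g1; exists (k + 5)%N => n hn H hk hcod x.
case: k k2 hk hcod hn => [|[|k']] // _ hk hcod hn.
have hA := claimA _ _ _ x hk hcod.
have hB := claimB _ _ _ x hk hcod.
have hC : ((\sum_y #|diamonds k'.+2 H x y|)%:R <=
   (diamond_deg k'.+2 gamma H x)%:R * #|[set e in H | x \in e]|%:R
   + n%:R * (gamma * ('C(n, k'.+1))%:R) :> rat).
  rewrite natr_sum.
  apply: le_trans (_ : \sum_y ((((y != x) && diamond_adj k'.+2 gamma H x y) : nat)%:R
       * #|[set e in H | x \in e]|%:R + gamma * ('C(n, k'.+1))%:R) <= _).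
    apply: ler_sum => y _.
    case yN: ((y != x) && diamond_adj k'.+2 gamma H x y) => /=;
      rewrite ?mul1r ?mul0r ?add0r.
      apply: le_trans (_ : #|[set e in H | x \in e]|%:R <= _).
        by rewrite ler_nat; exact: diam_le hk.
      by rewrite lerDl; apply: mulr_ge0; [exact: ltW | exact: ler0n].
    move: yN; case: eqVneq => [->|_] /=.
      by rewrite diam_xx cards0 mulr_ge0 // ltW.
    by rewrite /diamond_adj /= => /negbT; rewrite -ltNge => /ltW.
  rewrite big_split /= -mulr_suml sumr_const card_ord -natr_sum sum_ind_card.
  by rewrite [n%:R * _]mulr_natl.
have n5 : (5%:R <= n%:R :> rat) by rewrite ler_nat; lia.
have C0 : (0 < ('C(n, k'.+1))%:R :> rat) by rewrite ltr0n bin_gt0; lia.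
set E := #|[set e in H | x \in e]|%:R in hA hB hC.
set C := ('C(n, k'.+1))%:R in hA hC C0.
set S := (\sum_y #|diamonds k'.+2 H x y|)%:R in hB hC.
set D := (diamond_deg k'.+2 gamma H x)%:R in hC *.
have E0 : 0 < E by lra.
have h1 : gamma * C <= 3 / 100 * E by nra.
have h2 : n%:R * (gamma * C) <= n%:R * (3 / 100 * E).
  by apply: ler_wpM2l => //; exact: ler0n.
have h3 : E * (n%:R / 3 - 1) <= E * (D + 3 / 100 * n%:R) by nra.
have h4 : n%:R / 3 - 1 <= D + 3 / 100 * n%:R by rewrite -(ler_pM2l E0).
lra.
Qed.
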